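(* Let $I\subseteq\mathbb{R}$ be a compact interval, let $b,d\colon I\to[0,\infty)$ and $c\colon I^2\to[0,\infty)$ be twice continuously differentiable, and let $f$ be the monomorphic invasion fitness defined in the context. Let $x_0$ be a point in the interior of $I$ which is not a local fitness maximum or minimum, and for $\delta>0$ let $g_\delta\colon[0,\infty)\to\mathcal{X}_\delta$ be the resident-trait function started from the unique resident trait $x_0$, as described in the context. Then, for every $T>0$, the functions $t\mapsto g_\delta(t/\delta^2)$ converge uniformly on $[0,T]$ (in particular in the space of càdlàg paths $\mathbb{D}([0,T],\mathbb{R})$) as $\delta\to0$ to the unique function $x\colon[0,T]\to I$ solving $$\frac{\mathrm{d}x}{\mathrm{d}t}=\partial_1 f(x(t),x(t)),\qquad x(0)=x_0.$$
   Context: Model: for $\delta>0$ the trait space is the grid $\mathcal{X}_\delta=I\cap\delta\mathbb{Z}$ (the grid is shifted if necessary so that $x_0\in\mathcal{X}_\delta$ for all $\delta$). An individual with trait $x$ gives birth at rate $b(x)$; with probability $K^{-\alpha}$ ($\alpha\in(0,1)$, $K$ the carrying capacity) the offspring mutates to $x+\delta$ or $x-\delta$ with equal probability (keeping the parental trait if the mutant is outside $\mathcal{X}_\delta$); it dies at rate $d(x)$ and, due to competition with each individual of trait $y$, at rate $c(x,y)/K$. A set of traits $\mathbf v$ coexists if the Lotka–Volterra system $\dot n_y=n_y(b(y)-d(y)-\sum_{x\in\mathbf v}c(y,x)n_x)$, $y\in\mathbf v$, has a unique coordinatewise strictly positive equilibrium $\bar n(\mathbf v)$; the invasion fitness of $y$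 against $\mathbf v$ is $f(y,\mathbf v)=b(y)-d(y)-\sum_{x\in\mathbf v}c(y,x)\bar n_x(\mathbf v)$, and $f(y,x):=f(y,\{x\})=b(y)-d(y)-c(y,x)\frac{b(x)-d(x)}{c(x,x)}$ (with $b(x)>d(x)$ so that single traits coexist). A trait $x$ is a local fitness minimum if $f(x+\delta,x)>0$ and $f(x-\delta,x)>0$, and a local fitness maximum if $f(x+\delta,x)<0$ and $f(x-\delta,x)<0$. Large-population limit: writing the population size of trait $x$ at time $t\log K$ as $K^{\beta^K_{x}(t)}-1$, as $K\to\infty$ and then $\alpha\to1$ the exponents converge to deterministic piecewise affine functions $\beta^\delta_x$, defined recursively: $\beta^\delta_{x_0}(0)=1$, $\beta^\delta_x(0)=0$ otherwise, $s_0=0$, $\mathbf v_0=\{x_0\}$; for $t\in[s_{k-1},s_k]$, $\beta^\delta_x(t)=[\beta^\delta_x(s_{k-1})+(t-s_{k-1})f(x,\mathbf v_{k-1})]\vee0$ if $x$ is a grid neighbour of a trait in $\mathbf v_{k-1}$ (not in $\mathbf v_{k-1}$) or $\beta^\delta_x(s_{k-1})>0$, and $\beta^\delta_x(t)=0$ otherwise; $s_k$ is the first time after $s_{k-1}$ at which some $y_k\notin\mathbf v_{k-1}$ has $\beta^\delta_{y_k}=1$, and $\mathbf v_k$ consists of the traits with positive coordinates in the equilibrium of the Lotka–Volterra system for $\mathbf v_{k-1}\cup\{y_k\}$. A trait $x$ is resident at time $t$ if $\beta^\delta_x(t)=1$. Standing assumptions: the population stays monomorphic (at each time there is a unique resident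 trait and each change of resident replaces it by a grid neighbour); every trait $x$ that is resident at some time $t_1$ and has $\beta^\delta_x(t_2)<1$ at a later time $t_2$ satisfies $\beta^\delta_x<1$ on $[t_2,t_3]$ and $\beta^\delta_x(t_3)=0$ for some $t_3>t_2$; and (by convention on the direction of evolution) the resident trait increases. $g_\delta(t)$ is the unique resident trait at time $t$, taken càdlàg at the change times; under these conventions $$g_\delta(t)=x_0+\max\Big\{i\delta:\ t\ge\sum_{k=0}^{i-1}\frac{1}{f(x_0+(k+1)\delta,\,x_0+k\delta)}\Big\},$$ with the convention that $1/f=\infty$ when $f\le 0$.
   Formalization: A solution x of the equation with x(0)=x₀ and values in I on [0,T] is assumed to exist rather than asserted, the increasing direction is the hypothesis $\partial_1 f(x_0,x_0)\ge0$, and c(x,x) > 0 on I. Each condition added here is assumed in the paper as well or is needed for the statement above to hold. *)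

(* Defs.v *)
From Stdlib Require Import Reals Lra.
From Coquelicot Require Import Coquelicot.
Open Scope R_scope.

Definition C2_1 (h : R -> R) : Prop :=
  forall x, ex_derive h x /\ ex_derive (Derive h) x /\
            continuous (Derive (Derive h)) x.

Definition d1 (c : R -> R -> R) (x y : R) : R := Derive (fun u => c u y) x.
Definition d2 (c : R -> R -> R) (x y : R) : R := Derive (fun v => c x v) y.

Definition C2_2 (c : R -> R -> R) : Prop :=
  forall x y,
    ex_derive (fun u => c u y) x /\ ex_derive (fun v => c x v) y /\
    ex_derive (fun u => d1 c u y) x /\ ex_derive (fun v => d1 c x v) y /\
    ex_derive (fun u => d2 c u y) x /\ ex_derive (fun v => d2 c x v) y /\
    continuous (fun z : R * R => c (fst z) (snd z)) (x, y) /\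
    continuous (fun z : R * R => d1 c (fst z) (snd z)) (x, y) /\
    continuous (fun z : R * R => d2 c (fst z) (snd z)) (x, y) /\
    continuous (fun z : R * R => d1 (d1 c) (fst z) (snd z)) (x, y) /\
    continuous (fun z : R * R => d2 (d1 c) (fst z) (snd z)) (x, y) /\
    continuous (fun z : R * R => d1 (d2 c) (fst z) (snd z)) (x, y) /\
    continuous (fun z : R * R => d2 (d2 c) (fst z) (snd z)) (x, y).

(** Monomorphic invasion fitness f(y,x) of y against resident x. *)
Definition fit (b d : R -> R) (c : R -> R -> R) (y x : R) : R :=
  b y - d y - c y x * (b x - d x) / c x x.

Definition local_fit_min b d c (delta x : R) : Prop :=
  0 < fit b d c (x + delta) x /\ 0 < fit b d c (x - delta) x.
Definition local_fit_max b d c (delta x : R) : Prop :=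
  fit b d c (x + delta) x < 0 /\ fit b d c (x - delta) x < 0.

Definition step_fit b d c (x0 delta : R) (k : nat) : R :=
  fit b d c (x0 + INR (S k) * delta) (x0 + INR k * delta).

Fixpoint tsum (h : nat -> R) (n : nat) : R :=
  match n with O => 0 | S m => tsum h m + h m end.

(** i is admissible at time t: the grid point x0 + i delta lies in I
    (upper end bI), and t >= sum_{k<i} 1/f(x0+(k+1)delta, x0+k delta),
    where every such f is > 0 (convention 1/f = +oo when f <= 0). *)
Definition admissible b d c (bI x0 delta t : R) (i : nat) : Prop :=
  x0 + INR i * delta <= bI /\
  (forall k, (k < i)%nat -> 0 < step_fit b d c x0 delta k) /\
  tsum (fun k => / step_fit b d c x0 delta k) i <= t.

Definition resident_path b d c (bI x0 : R) (g : R -> R -> R) : Prop :=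
  forall delta t, 0 < delta -> 0 <= t ->
    exists i, admissible b d c bI x0 delta t i /\
      (forall j, admissible b d c bI x0 delta t j -> (j <= i)%nat) /\
      g delta t = x0 + INR i * delta.

(* Main.v *)
Require Import Defs.
From Stdlib Require Import Reals.
From Coquelicot Require Import Coquelicot.
Open Scope R_scope.
From Stdlib Require Import Lra Lia List ClassicalEpsilon Classical.
Import Defs.
Lemma D_eq (f : R -> R) (x l1 l2 : R) : is_derive f x l1 -> l1 = l2 -> is_derive f x l2.
Proof. intros H ->; exact H. Qed.
Lemma D_plus (f g : R -> R) (x : R) df dg : is_derive f x df -> is_derive g x dg -> is_derive (fun t => f t + g t) x (df + dg).
Proof. intros; exact (is_derive_plus f g x df dg H H0). Qed.
Lemma D_minus (f g : R -> R) (x : R) df dg : is_derive f x df -> is_derive g x dg -> is_derive (fun t => f t - g t) x (df - dg).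
Proof. intros; exact (is_derive_minus f g x df dg H H0). Qed.
Lemma D_mult (f g : R -> R) (x : R) df dg : is_derive f x df -> is_derive g x dg -> is_derive (fun t => f t * g t) x (df * g x + f x * dg).
Proof. intros; exact (is_derive_mult f g x df dg H H0 Rmult_comm). Qed.
Lemma D_const (a x : R) : is_derive (fun _ => a) x 0.
Proof. exact (is_derive_const a x). Qed.
Lemma D_id (x : R) : is_derive (fun t => t) x 1.
Proof. exact (is_derive_id x). Qed.
Lemma D_exp (f : R -> R) (x df : R) : is_derive f x df -> is_derive (fun t => exp (f t)) x (df * exp (f x)).
Proof. intros H. exact (is_derive_comp exp f x (exp (f x)) df (is_derive_exp (f x)) H). Qed.
Lemma D_sqrt (f : R -> R) (x df : R) : is_derive f x df -> 0 < f x -> is_derive (fun t => sqrt (f t)) x (df / (2 * sqrt (f x))).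
Proof. intros; exact (is_derive_sqrt f x df H H0). Qed.
Lemma deriv_cont f x l : is_derive f x l -> continuity_pt f x.
Proof.
  intros H. apply continuity_pt_filterlim. apply (ex_derive_continuous f x).
  exists l; exact H.
Qed.

Lemma mvt_eq (f df : R -> R) p q : p <= q ->
  (forall t, p <= t <= q -> is_derive f t (df t)) ->
  exists xi, p <= xi <= q /\ f q - f p = df xi * (q - p).
Proof.
  intros Hpq Hd.
  destruct (MVT_gen f p q df) as [xi [Hxi Heq]].
  - intros x Hx. apply Hd. rewrite Rmin_left in Hx by lra. rewrite Rmax_right in Hx by lra. lra.
  - intros x Hx. apply (deriv_cont f x (df x)). apply Hd.
    rewrite Rmin_left in Hx by lra. rewrite Rmax_right in Hx by lra. lra.
  - exists xi. rewrite Rmin_left in Hxi by lra. rewrite Rmax_right in Hxi by lra. split; auto.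
Qed.

Lemma mvt_dec (f df : R -> R) p q : p <= q ->
  (forall t, p <= t <= q -> is_derive f t (df t)) ->
  (forall t, p <= t <= q -> df t <= 0) -> f q <= f p.
Proof.
  intros Hpq Hd Hn. destruct (mvt_eq f df p q Hpq Hd) as [xi [Hxi Heq]].
  specialize (Hn xi Hxi). nra.
Qed.

Lemma mvt_bound (f df : R -> R) p q M : p <= q ->
  (forall t, p <= t <= q -> is_derive f t (df t)) ->
  (forall t, p <= t <= q -> Rabs (df t) <= M) -> Rabs (f q - f p) <= M * (q - p).
Proof.
  intros Hpq Hd Hn. destruct (mvt_eq f df p q Hpq Hd) as [xi [Hxi Heq]].
  specialize (Hn xi Hxi). rewrite Heq, Rabs_mult, (Rabs_right (q-p)) by lra.
  apply Rmult_le_compat_r; lra.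
Qed.

Lemma mvt_bound_abs (f df : R -> R) a b M x y :
  (forall t, a <= t <= b -> is_derive f t (df t)) ->
  (forall t, a <= t <= b -> Rabs (df t) <= M) ->
  a <= x <= b -> a <= y <= b -> Rabs (f x - f y) <= M * Rabs (x - y).
Proof.
  intros Hd Hb Hx Hy. destruct (Rle_dec x y).
  - rewrite Rabs_minus_sym, (Rabs_left1 (x-y)) by lra.
    replace (- (x-y)) with (y - x) by ring.
    apply (mvt_bound f df); try lra; intros t Ht; [apply Hd|apply Hb]; lra.
  - rewrite (Rabs_right (x-y)) by lra.
    apply (mvt_bound f df); try lra; intros t Ht; [apply Hd|apply Hb]; lra.
Qed.

Lemma gronwall_piece (p q L c : R) (phi dphi : R -> R) : p <= q -> 0 < L ->
  (forall t, p <= t <= q -> is_derive phi t (dphi t)) ->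
  (forall t, p <= t <= q -> dphi t <= L * phi t + c) ->
  phi q + c / L <= (phi p + c / L) * exp (L * (q - p)).
Proof.
  intros Hpq HL Hd Hb.
  set (Psi := fun t => (phi t + c / L) * exp ((- L) * t)).
  assert (H : Psi q <= Psi p).
  { apply (mvt_dec Psi (fun t => (dphi t - L * phi t - c) * exp ((- L) * t))); auto.
    - intros t Ht. unfold Psi.
      eapply D_eq.
      + apply (D_mult (fun t => phi t + c / L) (fun t => exp ((- L) * t))).
        * apply D_plus. apply Hd; auto. apply D_const.
        * apply (D_exp (fun t => (-L) * t)). apply (D_mult (fun _ => -L) (fun t => t)).
          apply D_const. apply D_id.
      + field. lra.
    - intros t Ht. specialize (Hb t Ht). assert (0 < exp (- L * t)) by apply exp_pos. nra. }
  unfold Psi in H.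
  assert (E1 : exp (L * (q - p)) * exp (- L * q) = exp (- L * p)).
  { rewrite <- exp_plus. f_equal. ring. }
  assert (0 < exp (L * (q - p))) by apply exp_pos.
  assert (0 < exp (- L * q)) by apply exp_pos.
  apply (Rmult_le_reg_r (exp (- L * q))); auto.
  rewrite Rmult_assoc, E1. exact H.
Qed.

Lemma exp_le x y : x <= y -> exp x <= exp y.
Proof. intros H. destruct (Rle_lt_or_eq_dec _ _ H) as [h|h]. left; apply exp_increasing; auto. rewrite h; lra. Qed.

Lemma abs_le_sqrt z k : Rabs z <= sqrt (z * z + k * k).
Proof.
  rewrite <- sqrt_Rsqr_abs. apply sqrt_le_1_alt. unfold Rsqr. nra.
Qed.

Lemma segment (aI bI T L c delta : R) (s xs : R -> R) (p q v xk : R) :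
  0 < L -> 0 < delta -> 0 <= p <= q -> q <= T -> aI <= xk <= bI ->
  (forall x y, aI<=x<=bI -> aI<=y<=bI -> Rabs (s x - s y) <= L * Rabs (x - y)) ->
  (forall t, 0<=t<=T -> aI <= xs t <= bI) ->
  (forall t, 0<=t<=T -> is_derive xs t (s (xs t))) ->
  (forall u, p <= u <= q -> Rabs ((u - p) * v) <= delta) ->
  Rabs (v - s xk) + L * delta <= c ->
  let phi := fun u => sqrt ((xs u - (xk + (u - p) * v)) * (xs u - (xk + (u - p) * v)) + delta * delta) in
  phi q + c / L <= (phi p + c / L) * exp (L * (q - p)).
Proof.
  intros HL Hd Hpq HqT Hxk Hlip Hin Hder Hv Hc phi.
  set (Z := fun u => xs u - (xk + (u - p) * v)).
  set (dZ := fun u => s (xs u) - v).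
  apply (gronwall_piece p q L c phi (fun u => (dZ u * Z u + Z u * dZ u + 0) / (2 * phi u))); try lra.
  - intros t Ht. unfold phi.
    apply (D_sqrt (fun u => (xs u - (xk + (u - p) * v)) * (xs u - (xk + (u - p) * v)) + delta * delta)).
    + apply (D_plus (fun u => (xs u - (xk + (u - p) * v)) * (xs u - (xk + (u - p) * v))) (fun _ => delta * delta)); [|apply D_const].
      assert (HZ : is_derive Z t (dZ t)).
      { unfold Z, dZ. eapply D_eq.
        apply (D_minus xs (fun u => xk + (u - p) * v)). apply Hder; lra.
        apply (D_plus (fun _ => xk) (fun u => (u - p) * v)). apply D_const.
        apply (D_mult (fun u => u - p) (fun _ => v)). apply (D_minus (fun u => u) (fun _ => p)).
        apply D_id. apply D_const. apply D_const. ring. }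
      exact (D_mult Z Z t _ _ HZ HZ).
    + cbv beta. set (zz := xs t - (xk + (t - p) * v)). nra.
  - intros t Ht. fold (Z t).
    assert (Hr : 0 < phi t). { unfold phi. apply sqrt_lt_R0. fold (Z t). nra. }
    assert (HZr : Rabs (Z t) <= phi t). { unfold phi. fold (Z t). apply abs_le_sqrt. }
    assert (HdZ : Rabs (dZ t) <= L * Rabs (Z t) + c).
    { unfold dZ. assert (Hxt := Hin t ltac:(lra)).
      assert (H1 := Hlip (xs t) xk Hxt Hxk).
      assert (H2 := Hv t Ht).
      assert (H3 : Rabs (xs t - xk) <= Rabs (Z t) + delta).
      { unfold Z. replace (xs t - xk) with ((xs t - (xk + (t - p) * v)) + (t - p) * v) by ring.
        eapply Rle_trans. apply Rabs_triang. lra. }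
      replace (s (xs t) - v) with ((s (xs t) - s xk) - (v - s xk)) by ring.
      eapply Rle_trans. apply Rabs_triang. rewrite Rabs_Ropp. nra. }
    apply (Rmult_le_reg_r (2 * phi t)). lra.
    unfold Rdiv. rewrite Rmult_assoc, Rinv_l by lra. rewrite Rmult_1_r.
    assert (Z t * dZ t <= Rabs (Z t) * Rabs (dZ t)).
    { rewrite <- Rabs_mult. apply Rle_abs. }
    assert (0 <= Rabs (Z t)) by apply Rabs_pos.
    assert (0 <= Rabs (dZ t)) by apply Rabs_pos.
    assert (Rabs (Z t) * Rabs (dZ t) <= phi t * Rabs (dZ t)) by (apply Rmult_le_compat_r; lra).
    assert (phi t * Rabs (dZ t) <= phi t * (L * phi t + c)).
    { apply Rmult_le_compat_l. lra. assert (L * Rabs (Z t) <= L * phi t) by (apply Rmult_le_compat_l; lra). lra. }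
    lra.
Qed.

Lemma capped (aI bI T L c delta : R) (s xs : R -> R) (p q xk : R) :
  0 < L -> 0 < delta -> 0 <= p <= q -> q <= T -> aI <= xk <= bI -> bI < xk + delta ->
  (forall x y, aI<=x<=bI -> aI<=y<=bI -> Rabs (s x - s y) <= L * Rabs (x - y)) ->
  (forall t, 0<=t<=T -> aI <= xs t <= bI) ->
  (forall t, 0<=t<=T -> is_derive xs t (s (xs t))) ->
  - s xk + L * delta <= c ->
  let h := fun u => xk - xs u + delta in
  h q + c / L <= (h p + c / L) * exp (L * (q - p)).
Proof.
  intros HL Hd Hpq HqT Hxk Hcap Hlip Hin Hder Hc h.
  apply (gronwall_piece p q L c h (fun u => - s (xs u))); try lra.
  - intros t Ht. unfold h. eapply D_eq.
    apply (D_plus (fun u => xk - xs u) (fun _ => delta)).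
    apply (D_minus (fun _ => xk) xs). apply D_const. apply Hder; lra. apply D_const. ring.
  - intros t Ht. assert (Hxt := Hin t ltac:(lra)).
    assert (H1 := Hlip xk (xs t) Hxk Hxt).
    assert (Hh : 0 <= h t) by (unfold h; lra).
    assert (Rabs (xk - xs t) <= h t + delta).
    { unfold h. apply Rabs_le. lra. }
    assert (s xk - s (xs t) <= L * (h t + delta)).
    { eapply Rle_trans. apply Rle_abs. eapply Rle_trans. apply H1. apply Rmult_le_compat_l; lra. }
    lra.
Qed.

Lemma main_part (aI bI : R) (b d : R -> R) (c : R -> R -> R) (x0 : R)
    (g : R -> R -> R) (T : R) (xs s : R -> R) (L K : R) :
  aI < x0 < bI -> 0 < L -> 0 <= K ->
  (forall x y, aI<=x<=bI -> aI<=y<=bI -> Rabs (s x - s y) <= L * Rabs (x - y)) ->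
  (forall x h, aI <= x -> 0 < h -> x + h <= bI ->
     Rabs (fit b d c (x + h) x - h * s x) <= K * (h * h)) ->
  0 <= s x0 ->
  resident_path b d c bI x0 g ->
  xs 0 = x0 ->
  (forall t, 0 <= t <= T -> aI <= xs t <= bI) ->
  (forall t, 0 <= t <= T -> is_derive xs t (s (xs t))) ->
  forall delta t, 0 < delta -> 0 <= t <= T ->
    Rabs (g delta (t / delta ^ 2) - xs t) <= delta * ((2 + (K + 2 * L) / L) * exp (L * T) + 1).
Proof.
  intros Hx0 HL HK Hlip Hstep Hs0 Hg Hxs0 Hin Hder delta t Hd Ht.
  set (xk := fun k : nat => x0 + INR k * delta).
  set (Fk := fun k => step_fit b d c x0 delta k).
  set (Tk := fun k => delta ^ 2 * tsum (fun j => / Fk j) k).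
  set (cc := (K + 2 * L) * delta).
  set (A := delta + cc / L).
  assert (HxS : forall k, xk (S k) = xk k + delta).
  { intros k. unfold xk. rewrite S_INR. ring. }
  assert (Hxge : forall k, x0 <= xk k).
  { intros k. unfold xk. assert (0 <= INR k) by apply pos_INR. nra. }
  assert (HF : forall k, xk k + delta <= bI -> Rabs (Fk k - delta * s (xk k)) <= K * (delta * delta)).
  { intros k Hk. assert (E : Fk k = fit b d c (xk k + delta) (xk k)).
    { rewrite <- HxS. reflexivity. }
    rewrite E. apply Hstep; auto. specialize (Hxge k); lra. }
  assert (HTS : forall k, Tk (S k) = Tk k + delta ^ 2 / Fk k).
  { intros k. unfold Tk. simpl tsum. unfold Rdiv. ring. }
  assert (Hx00 : xk 0%nat = x0). { unfold xk. simpl. ring. }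
  set (reach := fun k => xk k <= bI /\ forall j, (j < k)%nat -> 0 < Fk j).
  assert (Hlow : forall k, reach k -> - s (xk k) <= (K + L) * delta).
  { intros [|k] [Hb Hp].
    - rewrite Hx00. nra.
    - assert (Hp' := Hp k ltac:(lia)).
      rewrite HxS in Hb.
      assert (H1 := HF k Hb).
      assert (H2 : delta * (- s (xk k)) <= delta * (K * delta)).
      { apply Rabs_le_between in H1.
        assert (delta * (- s (xk k)) = -(delta * s (xk k))) by ring.
        assert (delta * (K * delta) = K * (delta * delta)) by ring. lra. }
      apply Rmult_le_reg_l in H2; auto.
      assert (H3 := Hlip (xk (S k)) (xk k)).
      rewrite HxS in H3.
      assert (Hk := Hxge k).
      specialize (H3 ltac:(lra) ltac:(lra)).
      replace (xk k + delta - xk k) with delta in H3 by ring.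
      rewrite (Rabs_right delta) in H3 by lra.
      apply Rabs_le_between in H3. rewrite HxS. lra. }
  assert (Hclaim : forall k, reach k -> Tk k <= T -> 0 <= Tk k /\
    sqrt ((xs (Tk k) - xk k) * (xs (Tk k) - xk k) + delta * delta) + cc / L <= A * exp (L * Tk k)).
  { induction k as [|k IH]; intros [Hb Hp] HT.
    - assert (E0 : Tk 0%nat = 0) by (unfold Tk; simpl; ring). rewrite E0, Hxs0, Hx00.
      split; [lra|]. replace (x0 - x0) with 0 by ring.
      rewrite Rmult_0_l, Rplus_0_l, sqrt_square by lra. rewrite Rmult_0_r, exp_0. unfold A. lra.
    - assert (Hpk := Hp k ltac:(lia)).
      assert (Hrk : reach k).
      { split. rewrite HxS in Hb. lra. intros j Hj. apply Hp. lia. }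
      assert (Hq : Tk k <= Tk (S k)).
      { rewrite HTS. assert (0 < delta ^ 2 / Fk k) by (apply Rdiv_lt_0_compat; [apply pow_lt|]; lra). lra. }
      destruct (IH Hrk ltac:(lra)) as [Hp0 IHb].
      split; [lra|].
      assert (Hxk := Hxge k). rewrite HxS in Hb.
      assert (HFk := HF k Hb).
      set (v := Fk k / delta).
      assert (Hv : forall u, Tk k <= u <= Tk (S k) -> Rabs ((u - Tk k) * v) <= delta).
      { intros u Hu. rewrite HTS in Hu. unfold v.
        assert (0 <= Fk k / delta) by (apply Rlt_le, Rdiv_lt_0_compat; lra).
        rewrite Rabs_right by (apply Rle_ge, Rmult_le_pos; lra).
        apply Rle_trans with ((delta ^ 2 / Fk k) * (Fk k / delta)).
        apply Rmult_le_compat_r; lra.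
        right. field. split; lra. }
      assert (Hc : Rabs (v - s (xk k)) + L * delta <= cc).
      { assert (E : Rabs (v - s (xk k)) * delta = Rabs (Fk k - delta * s (xk k))).
        { replace (Rabs (v - s (xk k)) * delta) with (Rabs (v - s (xk k)) * Rabs delta)
            by (rewrite (Rabs_right delta) by lra; reflexivity).
          rewrite <- Rabs_mult. f_equal. unfold v. field. lra. }
        assert (Rabs (v - s (xk k)) <= K * delta).
        { apply (Rmult_le_reg_r delta); auto. rewrite E. lra. }
        unfold cc. assert (0 < L * delta) by nra. lra. }
      assert (Hseg := segment aI bI T L cc delta s xs (Tk k) (Tk (S k)) v (xk k) HL Hd
                 ltac:(lra) HT ltac:(lra) Hlip Hin Hder Hv Hc).
      cbv beta zeta in Hseg.
      assert (E1 : xk k + (Tk (S k) - Tk k) * v = xk (S k)).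
      { rewrite HxS, HTS. unfold v. field. split; lra. }
      assert (E2 : xk k + (Tk k - Tk k) * v = xk k) by ring.
      rewrite E1, E2 in Hseg.
      assert (E3 : exp (L * Tk (S k)) = exp (L * Tk k) * exp (L * (Tk (S k) - Tk k))).
      { rewrite <- exp_plus. f_equal. ring. }
      rewrite E3.
      assert (0 < exp (L * (Tk (S k) - Tk k))) by apply exp_pos.
      eapply Rle_trans. exact Hseg. rewrite <- Rmult_assoc.
      apply Rmult_le_compat_r; lra. }
  assert (Ht' : 0 <= t / delta ^ 2).
  { apply Rmult_le_pos. lra. apply Rlt_le, Rinv_0_lt_compat, pow_lt; lra. }
  destruct (Hg delta (t / delta ^ 2) Hd Ht') as [i [Hadm [Hmax Hgi]]].
  rewrite Hgi. change (x0 + INR i * delta) with (xk i).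
  assert (Hnot : ~ admissible b d c bI x0 delta (t / delta ^ 2) (S i)).
  { intros H. specialize (Hmax _ H). lia. }
  destruct Hadm as [Hbi [Hpi Hsum]].
  assert (Hd2 : 0 < delta ^ 2) by (apply pow_lt; lra).
  assert (HTi : Tk i <= t).
  { unfold Tk, Fk. apply (Rmult_le_compat_l (delta ^ 2)) in Hsum; [|lra].
    replace (delta ^ 2 * (t / delta ^ 2)) with t in Hsum by (field; lra). exact Hsum. }
  assert (Hri : reach i) by (split; [exact Hbi | exact Hpi]).
  destruct (Hclaim i Hri ltac:(lra)) as [HT0 Hbnd].
  set (phi_i := sqrt ((xs (Tk i) - xk i) * (xs (Tk i) - xk i) + delta * delta)) in Hbnd.
  assert (Hphi_i : Rabs (xs (Tk i) - xk i) <= phi_i) by apply abs_le_sqrt.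
  set (E := exp (L * T)).
  assert (He1 : 1 <= exp (L * Tk i)). { rewrite <- exp_0. apply exp_le. nra. }
  assert (He2 : 0 < exp (L * (t - Tk i))) by apply exp_pos.
  assert (He12 : exp (L * Tk i) * exp (L * (t - Tk i)) <= E).
  { rewrite <- exp_plus. apply exp_le. nra. }
  assert (HccL : 0 <= cc / L).
  { unfold cc. apply Rmult_le_pos; [|apply Rlt_le, Rinv_0_lt_compat; lra]. nra. }
  assert (HA : 0 <= A) by (unfold A; lra).
  assert (Hgoal : delta * ((2 + (K + 2 * L) / L) * E + 1) = (A + delta) * E + delta).
  { unfold A, cc. field. lra. }
  rewrite Hgoal.
  assert (HE0 : 0 < E) by apply exp_pos.
  assert (HxkI : aI <= xk i <= bI) by (split; [specialize (Hxge i); lra | exact Hbi]).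
  assert (Hxt := Hin t Ht).
  assert (Hslow := Hlow i Hri).
  destruct (Rle_dec (xk (S i)) bI) as [Hle | Hcap].
  - assert (Hle' := Hle). rewrite HxS in Hle'.
    assert (HFi := HF i Hle').
    destruct (Rlt_dec 0 (Fk i)) as [Hpos | Hstuck].
    + assert (Hlt : t < Tk (S i)).
      { destruct (Rlt_dec t (Tk (S i))) as [h|h]; auto. exfalso; apply Hnot.
        split; [exact Hle | split].
        - intros j Hj. destruct (Nat.eq_dec j i) as [->|n]. exact Hpos. apply Hpi; lia.
        - apply (Rmult_le_reg_l (delta ^ 2)); auto.
          replace (delta ^ 2 * (t / delta ^ 2)) with t by (field; lra).
          unfold Tk, Fk in h. lra. }
      set (v := Fk i / delta).
      assert (Hv : forall u, Tk i <= u <= t -> Rabs ((u - Tk i) * v) <= delta).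
      { intros u Hu. assert (Hu' : u <= Tk (S i)) by lra. rewrite HTS in Hu'. unfold v.
        assert (0 <= Fk i / delta) by (apply Rlt_le, Rdiv_lt_0_compat; lra).
        rewrite Rabs_right by (apply Rle_ge, Rmult_le_pos; lra).
        apply Rle_trans with ((delta ^ 2 / Fk i) * (Fk i / delta)).
        apply Rmult_le_compat_r; lra.
        right. field. split; lra. }
      assert (Hc : Rabs (v - s (xk i)) + L * delta <= cc).
      { assert (Ee : Rabs (v - s (xk i)) * delta = Rabs (Fk i - delta * s (xk i))).
        { replace (Rabs (v - s (xk i)) * delta) with (Rabs (v - s (xk i)) * Rabs delta)
            by (rewrite (Rabs_right delta) by lra; reflexivity).
          rewrite <- Rabs_mult. f_equal. unfold v. field. lra. }
        assert (Rabs (v - s (xk i)) <= K * delta).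
        { apply (Rmult_le_reg_r delta); auto. rewrite Ee.
          replace (K * delta * delta) with (K * (delta * delta)) by ring. exact HFi. }
        unfold cc. assert (0 < L * delta) by nra. lra. }
      assert (Hseg := segment aI bI T L cc delta s xs (Tk i) t v (xk i) HL Hd
                 ltac:(lra) ltac:(lra) HxkI Hlip Hin Hder Hv Hc).
      cbv beta zeta in Hseg.
      replace (xk i + (Tk i - Tk i) * v) with (xk i) in Hseg by ring.
      fold phi_i in Hseg.
      assert (Hz := abs_le_sqrt (xs t - (xk i + (t - Tk i) * v)) delta).
      assert (Hvt := Hv t ltac:(lra)).
      assert (Htri : Rabs (xk i - xs t) <= Rabs ((t - Tk i) * v) + Rabs (xs t - (xk i + (t - Tk i) * v))).
      { replace (xk i - xs t) with (- ((t - Tk i) * v) - (xs t - (xk i + (t - Tk i) * v))) by ring.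
        eapply Rle_trans. apply Rabs_triang. rewrite Rabs_Ropp, Rabs_Ropp. lra. }
      assert ((phi_i + cc / L) * exp (L * (t - Tk i)) <= A * exp (L * Tk i) * exp (L * (t - Tk i))).
      { apply Rmult_le_compat_r; lra. }
      assert (A * exp (L * Tk i) * exp (L * (t - Tk i)) <= A * E).
      { rewrite Rmult_assoc. apply Rmult_le_compat_l; lra. }
      assert (0 <= delta * E) by nra.
      nra.
    + set (v := 0).
      assert (Hv : forall u, Tk i <= u <= t -> Rabs ((u - Tk i) * v) <= delta).
      { intros u Hu. unfold v. rewrite Rmult_0_r, Rabs_R0. lra. }
      assert (Hc : Rabs (v - s (xk i)) + L * delta <= cc).
      { unfold v. apply Rabs_le_between in HFi.
        assert (H2 : delta * s (xk i) <= delta * (K * delta)).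
        { assert (delta * (K * delta) = K * (delta * delta)) by ring. lra. }
        apply Rmult_le_reg_l in H2; auto.
        assert (0 < L * delta) by nra.
        assert (Rabs (0 - s (xk i)) <= (K + L) * delta).
        { apply Rabs_le. lra. }
        unfold cc. lra. }
      assert (Hseg := segment aI bI T L cc delta s xs (Tk i) t v (xk i) HL Hd
                 ltac:(lra) ltac:(lra) HxkI Hlip Hin Hder Hv Hc).
      cbv beta zeta in Hseg.
      replace (xk i + (Tk i - Tk i) * v) with (xk i) in Hseg by ring.
      replace (xk i + (t - Tk i) * v) with (xk i) in Hseg by (unfold v; ring).
      fold phi_i in Hseg.
      assert (Hz := abs_le_sqrt (xs t - xk i) delta).
      rewrite Rabs_minus_sym in Hz.
      assert ((phi_i + cc / L) * exp (L * (t - Tk i)) <= A * exp (L * Tk i) * exp (L * (t - Tk i))).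
      { apply Rmult_le_compat_r; lra. }
      assert (A * exp (L * Tk i) * exp (L * (t - Tk i)) <= A * E).
      { rewrite Rmult_assoc. apply Rmult_le_compat_l; lra. }
      assert (0 <= delta * E) by nra.
      nra.
  - assert (Hcap' : bI < xk i + delta) by (rewrite HxS in Hcap; lra).
    assert (Hc : - s (xk i) + L * delta <= cc) by (unfold cc; lra).
    assert (Hcp := capped aI bI T L cc delta s xs (Tk i) t (xk i) HL Hd
                 ltac:(lra) ltac:(lra) HxkI Hcap' Hlip Hin Hder Hc).
    cbv beta zeta in Hcp.
    assert (Hh0 : 0 <= xk i - xs t + delta) by lra.
    assert (Hhp : xk i - xs (Tk i) + delta <= phi_i + delta).
    { rewrite Rabs_minus_sym in Hphi_i. assert (H := Rle_abs (xk i - xs (Tk i))). lra. }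
    assert ((xk i - xs (Tk i) + delta + cc / L) * exp (L * (t - Tk i))
              <= (A * exp (L * Tk i) + delta) * exp (L * (t - Tk i))).
    { apply Rmult_le_compat_r; lra. }
    assert ((A * exp (L * Tk i) + delta) * exp (L * (t - Tk i)) <= (A + delta) * E).
    { apply Rle_trans with ((A + delta) * (exp (L * Tk i) * exp (L * (t - Tk i)))).
      - assert (0 <= delta * exp (L * Tk i) * exp (L * (t - Tk i)) - delta * exp (L * (t - Tk i))).
        { assert (0 <= delta * exp (L * (t - Tk i))) by nra. 
          replace (delta * exp (L * Tk i) * exp (L * (t - Tk i)) - delta * exp (L * (t - Tk i)))
            with ((exp (L * Tk i) - 1) * (delta * exp (L * (t - Tk i)))) by ring.
          apply Rmult_le_pos; lra. }
        nra.
      - apply Rmult_le_compat_l; lra. }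
    assert (Rabs (xk i - xs t) <= (xk i - xs t + delta) + delta).
    { apply Rabs_le. lra. }
    lra.
Qed.

Lemma cont2_loc (h : R -> R -> R) u v :
  continuous (fun z : R * R => h (fst z) (snd z)) (u, v) ->
  exists eps : posreal, forall x y, Rabs (x - u) < eps -> Rabs (y - v) < eps ->
    Rabs (h x y - h u v) < 1.
Proof.
  intros H.
  assert (Hl := H (fun w => ball (h u v) 1 w) (locally_ball (h u v) (mkposreal 1 Rlt_0_1))).
  destruct Hl as [eps Heps]. exists eps. intros x y Hx Hy.
  exact (Heps (x, y) (conj Hx Hy)).
Qed.

Lemma list_max {A : Type} (l : list A) (f : A -> R) : exists M, forall t, In t l -> f t <= M.
Proof.
  induction l as [|a l [M HM]].
  - exists 0. intros t [].
  - exists (Rmax (f a) M). intros t [<-|Ht]. apply Rmax_l. eapply Rle_trans. apply HM; auto. apply Rmax_r.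
Qed.

Lemma bound2 (h : R -> R -> R) (a b : R) :
  (forall x y, a <= x <= b -> a <= y <= b -> continuous (fun z : R * R => h (fst z) (snd z)) (x, y)) ->
  exists M, forall x y, a <= x <= b -> a <= y <= b -> Rabs (h x y) <= M.
Proof.
  intros Hc.
  assert (Hex : forall t : Compactness.Tn 2 R, exists eps : posreal,
     bounded_n 2 (a, (a, tt)) (b, (b, tt)) t ->
     forall x y, Rabs (x - fst t) < eps -> Rabs (y - fst (snd t)) < eps ->
       Rabs (h x y - h (fst t) (fst (snd t))) < 1).
  { intros [u [v []]]. simpl.
    destruct (classic (a <= u <= b /\ (a <= v <= b /\ True))) as [Hb|Hb].
    - destruct Hb as [Hu [Hv _]]. destruct (cont2_loc h u v (Hc u v Hu Hv)) as [eps He].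
      exists eps. intros _. exact He.
    - exists (mkposreal 1 Rlt_0_1). intros Hb'. contradiction. }
  set (delta := fun t => proj1_sig (constructive_indefinite_description _ (Hex t))).
  assert (Hdelta : forall t, bounded_n 2 (a, (a, tt)) (b, (b, tt)) t ->
     forall x y, Rabs (x - fst t) < delta t -> Rabs (y - fst (snd t)) < delta t ->
       Rabs (h x y - h (fst t) (fst (snd t))) < 1).
  { intros t. unfold delta. destruct (constructive_indefinite_description _ (Hex t)) as [e He]. exact He. }
  apply NNPP. intros Hn.
  apply (compactness_list 2 (a, (a, tt)) (b, (b, tt)) delta). intros [l Hl].
  apply Hn.
  destruct (list_max l (fun t => Rabs (h (fst t) (fst (snd t))))) as [M HM].
  exists (M + 1). intros x y Hx Hy.
  destruct (Hl (x, (y, tt))) as [t [Hin [Htb Hcl]]].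
  { simpl. tauto. }
  destruct t as [u [v []]]. simpl in Hcl. destruct Hcl as [H1 [H2 _]].
  assert (E := Hdelta (u, (v, tt)) Htb x y H1 H2). simpl in E.
  assert (E2 := HM _ Hin). simpl in E2.
  assert (Rabs (h x y) <= Rabs (h x y - h u v) + Rabs (h u v)).
  { replace (h x y) with ((h x y - h u v) + h u v) at 1 by ring. apply Rabs_triang. }
  lra.
Qed.

Lemma bound1 (f : R -> R) (a b : R) : a <= b ->
  (forall x, a <= x <= b -> continuity_pt f x) ->
  exists M, forall x, a <= x <= b -> Rabs (f x) <= M.
Proof.
  intros Hab Hc.
  destruct (continuity_ab_maj f a b Hab Hc) as [xM [HM _]].
  destruct (continuity_ab_min f a b Hab Hc) as [xm [Hm _]].
  exists (Rmax (Rabs (f xM)) (Rabs (f xm))). intros x Hx.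
  specialize (HM x Hx). specialize (Hm x Hx).
  apply Rabs_le.
  assert (H1 := Rmax_l (Rabs (f xM)) (Rabs (f xm))).
  assert (H2 := Rmax_r (Rabs (f xM)) (Rabs (f xm))).
  assert (H3 := Rle_abs (f xM)). assert (H4 := Rabs_pos (f xm)).
  assert (H5 : - f xm <= Rabs (f xm)) by (rewrite <- Rabs_Ropp; apply Rle_abs).
  lra.
Qed.

Definition Lip (a b : R) (f : R -> R) := exists L, 0 <= L /\
  forall x y, a <= x <= b -> a <= y <= b -> Rabs (f x - f y) <= L * Rabs (x - y).

Lemma Lip_bounded a b f : a <= b -> Lip a b f -> exists M, 0 <= M /\ forall x, a <= x <= b -> Rabs (f x) <= M.
Proof.
  intros Hab [L [HL Hf]]. exists (Rabs (f a) + L * (b - a)). split.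
  - assert (0 <= Rabs (f a)) by apply Rabs_pos. nra.
  - intros x Hx. specialize (Hf x a Hx ltac:(lra)).
    rewrite (Rabs_right (x - a)) in Hf by lra.
    assert (Rabs (f x) <= Rabs (f x - f a) + Rabs (f a)).
    { replace (f x) with ((f x - f a) + f a) at 1 by ring. apply Rabs_triang. }
    assert (L * (x - a) <= L * (b - a)) by (apply Rmult_le_compat_l; lra). lra.
Qed.

Lemma Lip_deriv a b f df : a <= b ->
  (forall x, a <= x <= b -> is_derive f x (df x)) ->
  (exists M, forall x, a <= x <= b -> Rabs (df x) <= M) -> Lip a b f.
Proof.
  intros Hab Hd [M HM]. exists (Rmax 0 M). split. apply Rmax_l.
  intros x y Hx Hy. apply (mvt_bound_abs f df a b); auto.
  intros t Ht. eapply Rle_trans. apply HM; auto. apply Rmax_r.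
Qed.

Lemma Lip_plus a b f g : Lip a b f -> Lip a b g -> Lip a b (fun x => f x + g x).
Proof.
  intros [L1 [H1 F1]] [L2 [H2 F2]]. exists (L1 + L2). split. lra.
  intros x y Hx Hy. specialize (F1 x y Hx Hy). specialize (F2 x y Hx Hy).
  replace (f x + g x - (f y + g y)) with ((f x - f y) + (g x - g y)) by ring.
  eapply Rle_trans. apply Rabs_triang. lra.
Qed.

Lemma Lip_opp a b f : Lip a b f -> Lip a b (fun x => - f x).
Proof.
  intros [L1 [H1 F1]]. exists L1. split. lra.
  intros x y Hx Hy. specialize (F1 x y Hx Hy).
  replace (- f x - - f y) with (- (f x - f y)) by ring. rewrite Rabs_Ropp. lra.
Qed.

Lemma Lip_minus a b f g : Lip a b f -> Lip a b g -> Lip a b (fun x => f x - g x).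
Proof. intros H1 H2. apply (Lip_plus a b f (fun x => - g x)); auto. apply Lip_opp; auto. Qed.

Lemma Lip_mult a b f g : a <= b -> Lip a b f -> Lip a b g -> Lip a b (fun x => f x * g x).
Proof.
  intros Hab Hf Hg.
  destruct (Lip_bounded a b f Hab Hf) as [Mf [HMf Bf]].
  destruct (Lip_bounded a b g Hab Hg) as [Mg [HMg Bg]].
  destruct Hf as [L1 [H1 F1]]. destruct Hg as [L2 [H2 F2]].
  exists (Mf * L2 + Mg * L1). split. nra.
  intros x y Hx Hy. specialize (F1 x y Hx Hy). specialize (F2 x y Hx Hy).
  replace (f x * g x - f y * g y) with (f x * (g x - g y) + g y * (f x - f y)) by ring.
  eapply Rle_trans. apply Rabs_triang. rewrite !Rabs_mult.
  specialize (Bf x Hx). specialize (Bg y Hy).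
  assert (0 <= Rabs (g x - g y)) by apply Rabs_pos.
  assert (0 <= Rabs (f x - f y)) by apply Rabs_pos.
  assert (0 <= Rabs (x - y)) by apply Rabs_pos.
  assert (Rabs (f x) * Rabs (g x - g y) <= Mf * (L2 * Rabs (x - y))).
  { apply Rmult_le_compat; auto. apply Rabs_pos. }
  assert (Rabs (g y) * Rabs (f x - f y) <= Mg * (L1 * Rabs (x - y))).
  { apply Rmult_le_compat; auto. apply Rabs_pos. }
  nra.
Qed.

Lemma Lip_inv a b f m : 0 < m -> (forall x, a <= x <= b -> m <= f x) ->
  Lip a b f -> Lip a b (fun x => / f x).
Proof.
  intros Hm Hfm [L [HL F]]. exists (L / (m * m)). split.
  { apply Rmult_le_pos; auto. apply Rlt_le, Rinv_0_lt_compat. nra. }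
  intros x y Hx Hy. specialize (F x y Hx Hy).
  assert (Hx' := Hfm x Hx). assert (Hy' := Hfm y Hy).
  replace (/ f x - / f y) with ((f y - f x) / (f x * f y)) by (field; lra).
  unfold Rdiv. rewrite Rabs_mult, Rabs_minus_sym.
  rewrite (Rabs_right (/ (f x * f y))) by (apply Rle_ge, Rlt_le, Rinv_0_lt_compat; nra).
  assert (/ (f x * f y) <= / (m * m)).
  { apply Rinv_le_contravar. nra. apply Rmult_le_compat; lra. }
  assert (0 <= / (f x * f y)) by (apply Rlt_le, Rinv_0_lt_compat; nra).
  assert (0 <= Rabs (f x - f y)) by apply Rabs_pos.
  assert (0 <= Rabs (x - y)) by apply Rabs_pos.
  assert (0 <= / (m * m)) by (apply Rlt_le, Rinv_0_lt_compat; nra).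
  apply Rle_trans with (L * Rabs (x - y) * / (m * m)).
  apply Rmult_le_compat; auto. right; ring.
Qed.

Lemma Lip_mono a b f L L' : L <= L' -> 
  (forall x y, a <= x <= b -> a <= y <= b -> Rabs (f x - f y) <= L * Rabs (x - y)) ->
  (forall x y, a <= x <= b -> a <= y <= b -> Rabs (f x - f y) <= L' * Rabs (x - y)).
Proof.
  intros HL H x y Hx Hy. eapply Rle_trans. apply H; auto.
  apply Rmult_le_compat_r; auto. apply Rabs_pos.
Qed.

Lemma Lip_ext a b f g : (forall x, a <= x <= b -> f x = g x) -> Lip a b f -> Lip a b g.
Proof.
  intros E [L [HL F]]. exists L. split; auto. intros x y Hx Hy. rewrite <- !E; auto.
Qed.

Lemma lip_first (h h1 : R -> R -> R) a b M :
  (forall x y, is_derive (fun u => h u y) x (h1 x y)) ->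
  (forall x y, a <= x <= b -> a <= y <= b -> Rabs (h1 x y) <= M) ->
  forall x x' y, a <= x <= b -> a <= x' <= b -> a <= y <= b ->
    Rabs (h x y - h x' y) <= M * Rabs (x - x').
Proof.
  intros Hd HM x x' y Hx Hx' Hy.
  apply (mvt_bound_abs (fun u => h u y) (fun u => h1 u y) a b); auto.
Qed.

Lemma lip_second (h h2 : R -> R -> R) a b M :
  (forall x y, is_derive (fun v => h x v) y (h2 x y)) ->
  (forall x y, a <= x <= b -> a <= y <= b -> Rabs (h2 x y) <= M) ->
  forall x y y', a <= x <= b -> a <= y <= b -> a <= y' <= b ->
    Rabs (h x y - h x y') <= M * Rabs (y - y').
Proof.
  intros Hd HM x y y' Hx Hy Hy'.
  apply (mvt_bound_abs (fun v => h x v) (fun v => h2 x v) a b); auto.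
Qed.

Lemma lip_diag (h h1 h2 : R -> R -> R) a b M1 M2 : a <= b ->
  (forall x y, is_derive (fun u => h u y) x (h1 x y)) ->
  (forall x y, is_derive (fun v => h x v) y (h2 x y)) ->
  (forall x y, a <= x <= b -> a <= y <= b -> Rabs (h1 x y) <= M1) ->
  (forall x y, a <= x <= b -> a <= y <= b -> Rabs (h2 x y) <= M2) ->
  Lip a b (fun x => h x x).
Proof.
  intros Hab Hd1 Hd2 HM1 HM2.
  assert (0 <= M1). { eapply Rle_trans. apply Rabs_pos. apply (HM1 a a); lra. }
  assert (0 <= M2). { eapply Rle_trans. apply Rabs_pos. apply (HM2 a a); lra. }
  exists (M1 + M2). split. lra.
  intros x y Hx Hy.
  assert (E1 := lip_first h h1 a b M1 Hd1 HM1 x y x Hx Hy Hx).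
  assert (E2 := lip_second h h2 a b M2 Hd2 HM2 y x y Hy Hx Hy).
  replace (h x x - h y y) with ((h x x - h y x) + (h y x - h y y)) by ring.
  eapply Rle_trans. apply Rabs_triang. lra.
Qed.

Lemma C21_facts (f : R -> R) a b : a <= b -> C2_1 f ->
  (forall x, is_derive f x (Derive f x)) /\ Lip a b f /\ Lip a b (Derive f).
Proof.
  intros Hab Hf.
  assert (D1 : forall x, is_derive f x (Derive f x)).
  { intros x. apply Derive_correct. apply Hf. }
  assert (D2 : forall x, is_derive (Derive f) x (Derive (Derive f) x)).
  { intros x. apply Derive_correct. apply Hf. }
  split; auto. split.
  - apply (Lip_deriv a b f (Derive f)); auto.
    apply bound1; auto. intros x _. apply (deriv_cont _ _ _ (D2 x)).
  - apply (Lip_deriv a b (Derive f) (Derive (Derive f))); auto.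
    apply bound1; auto. intros x _. apply continuity_pt_filterlim. apply Hf.
Qed.

Lemma analytic (aI bI : R) (b d : R -> R) (c : R -> R -> R) :
  aI < bI -> C2_1 b -> C2_1 d -> C2_2 c ->
  (forall x, aI <= x <= bI -> d x < b x /\ 0 < c x x) ->
  exists L K, 0 < L /\ 0 <= K /\
   (forall x y, aI <= x <= bI -> aI <= y <= bI ->
      Rabs (Derive (fun u => fit b d c u x) x - Derive (fun u => fit b d c u y) y) <= L * Rabs (x - y)) /\
   (forall x h, aI <= x -> 0 < h -> x + h <= bI ->
      Rabs (fit b d c (x + h) x - h * Derive (fun u => fit b d c u x) x) <= K * (h * h)).
Proof.
  intros HI Hb Hd Hc Hpos.
  assert (HI' : aI <= bI) by lra.
  destruct (C21_facts b aI bI HI' Hb) as [Db [Lb LDb]].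
  destruct (C21_facts d aI bI HI' Hd) as [Dd [Ld LDd]].
  assert (Hc1 : forall x y, is_derive (fun u => c u y) x (d1 c x y)).
  { intros x y. apply Derive_correct. apply (Hc x y). }
  assert (Hc2 : forall x y, is_derive (fun v => c x v) y (d2 c x y)).
  { intros x y. apply Derive_correct. apply (Hc x y). }
  assert (Hc11 : forall x y, is_derive (fun u => d1 c u y) x (d1 (d1 c) x y)).
  { intros x y. apply Derive_correct. apply (Hc x y). }
  assert (Hc12 : forall x y, is_derive (fun v => d1 c x v) y (d2 (d1 c) x y)).
  { intros x y. apply Derive_correct. apply (Hc x y). }
  destruct (bound2 (d1 c) aI bI) as [M1 HM1]. { intros x y _ _. apply (Hc x y). }
  destruct (bound2 (d2 c) aI bI) as [M2 HM2]. { intros x y _ _. apply (Hc x y). }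
  destruct (bound2 (d1 (d1 c)) aI bI) as [M11 HM11]. { intros x y _ _. apply (Hc x y). }
  destruct (bound2 (d2 (d1 c)) aI bI) as [M12 HM12]. { intros x y _ _. apply (Hc x y). }
  assert (HM11p : 0 <= M11). { eapply Rle_trans. apply Rabs_pos. apply (HM11 aI aI); lra. }
  assert (Lcxx := lip_diag c (d1 c) (d2 c) aI bI M1 M2 HI' Hc1 Hc2 HM1 HM2).
  assert (Lq := lip_diag (d1 c) (d1 (d1 c)) (d2 (d1 c)) aI bI M11 M12 HI' Hc11 Hc12 HM11 HM12).
  assert (Hcont : forall x, continuity_pt (fun x => c x x) x).
  { intros x. apply continuity_pt_filterlim.
    apply (continuous_comp_2 (fun x : R => x) (fun x : R => x) c x).
    apply continuous_id. apply continuous_id. apply (Hc x x). }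
  destruct (continuity_ab_min (fun x => c x x) aI bI HI' (fun x _ => Hcont x)) as [mx [Hmx Hmxb]].
  set (m := c mx mx).
  assert (Hm : 0 < m) by (apply (Hpos mx Hmxb)).
  set (r := fun x => (b x - d x) / c x x).
  assert (Lr : Lip aI bI r).
  { apply (Lip_ext aI bI (fun x => (b x - d x) * / c x x)). intros; reflexivity.
    apply (Lip_mult aI bI (fun x => b x - d x) (fun x => / c x x)); auto.
    apply Lip_minus; auto.
    apply (Lip_inv aI bI (fun x => c x x) m); auto. }
  destruct (Lip_bounded aI bI r HI' Lr) as [Rr [HRr BRr]].
  assert (HD : forall x y, is_derive (fun u => fit b d c u x) y (Derive b y - Derive d y - d1 c y x * r x)).
  { intros x y. unfold fit, r. unfold Rdiv.
    eapply D_eq.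
    apply (D_minus (fun u => b u - d u) (fun u => c u x * (b x - d x) * / c x x)).
    apply (D_minus b d); auto.
    apply (D_mult (fun u => c u x * (b x - d x)) (fun _ => / c x x)).
    apply (D_mult (fun u => c u x) (fun _ => b x - d x)). apply Hc1. apply D_const. apply D_const.
    ring. }
  assert (Hs : forall x, Derive (fun u => fit b d c u x) x = Derive b x - Derive d x - d1 c x x * r x).
  { intros x. apply is_derive_unique. apply HD. }
  assert (Ls : Lip aI bI (fun x => Derive (fun u => fit b d c u x) x)).
  { apply (Lip_ext aI bI (fun x => Derive b x - Derive d x - d1 c x x * r x)).
    intros x _. symmetry. apply Hs.
    apply Lip_minus. apply Lip_minus; auto.
    apply (Lip_mult aI bI (fun x => d1 c x x) r); auto. }
  destruct Ls as [L0 [HL0 FL0]].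
  destruct LDb as [Lb' [HLb' FLb']].
  destruct LDd as [Ld' [HLd' FLd']].
  exists (L0 + 1), (Lb' + Ld' + M11 * Rr).
  split. lra. split. nra. split.
  - apply (Lip_mono aI bI _ L0); auto. lra.
  - intros x h Hx Hh Hxh.
    assert (Hfxx : fit b d c x x = 0).
    { unfold fit. assert (0 < c x x) by (apply Hpos; lra). field. lra. }
    set (sx := Derive (fun u => fit b d c u x) x).
    assert (E := mvt_bound (fun y => fit b d c y x - y * sx)
                  (fun y => (Derive b y - Derive d y - d1 c y x * r x) - sx) x (x + h)
                  ((Lb' + Ld' + M11 * Rr) * h) ltac:(lra)).
    assert (Hxx : aI <= x <= bI) by lra.
    assert (Hgl : fit b d c (x + h) x - h * sx = fit b d c (x + h) x - (x + h) * sx - (fit b d c x x - x * sx))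
      by (rewrite Hfxx; ring).
    rewrite Hgl.
    replace (x + h - x) with h in E by ring.
    replace ((Lb' + Ld' + M11 * Rr) * (h * h)) with ((Lb' + Ld' + M11 * Rr) * h * h) by ring.
    apply E.
    + intros t Ht. eapply D_eq.
      apply (D_minus (fun y => fit b d c y x) (fun y => y * sx)). apply HD.
      apply (D_mult (fun y => y) (fun _ => sx)). apply D_id. apply D_const. ring.
    + intros t Ht. unfold sx. rewrite Hs.
      assert (Ht' : aI <= t <= bI) by lra.
      replace (Derive b t - Derive d t - d1 c t x * r x - (Derive b x - Derive d x - d1 c x x * r x))
        with ((Derive b t - Derive b x) - (Derive d t - Derive d x) - (d1 c t x - d1 c x x) * r x) by ring.
      assert (A1 := FLb' t x Ht' Hxx).
      assert (A2 := FLd' t x Ht' Hxx).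
      assert (A3 := lip_first (d1 c) (d1 (d1 c)) aI bI M11 Hc11 HM11 t x x Ht' Hxx Hxx).
      assert (A4 := BRr x Hxx).
      assert (Htx : Rabs (t - x) <= h) by (apply Rabs_le; lra).
      assert (0 <= Rabs (t - x)) by apply Rabs_pos.
      assert (Rabs ((d1 c t x - d1 c x x) * r x) <= M11 * Rabs (t - x) * Rr).
      { rewrite Rabs_mult. apply Rmult_le_compat; auto; apply Rabs_pos. }
      eapply Rle_trans. apply Rabs_triang. rewrite Rabs_Ropp.
      eapply Rle_trans. apply Rplus_le_compat_r. apply Rabs_triang. rewrite Rabs_Ropp.
      assert (Lb' * Rabs (t - x) <= Lb' * h) by (apply Rmult_le_compat_l; lra).
      assert (Ld' * Rabs (t - x) <= Ld' * h) by (apply Rmult_le_compat_l; lra).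
      assert (M11 * Rabs (t - x) * Rr <= M11 * h * Rr).
      { apply Rmult_le_compat_r; auto. apply Rmult_le_compat_l; lra. }
      nra.
Qed.

Theorem theorem2 (aI bI : R) (b d : R -> R) (c : R -> R -> R) (x0 : R)
    (g : R -> R -> R) (T : R) (xs : R -> R) :
  aI < bI ->
  C2_1 b -> C2_1 d -> C2_2 c ->
  (forall x, aI <= x <= bI -> 0 <= b x /\ 0 <= d x) ->
  (forall x y, aI <= x <= bI -> aI <= y <= bI -> 0 <= c x y) ->
  (forall x, aI <= x <= bI -> d x < b x /\ 0 < c x x) ->
  aI < x0 < bI ->
  (forall delta, 0 < delta -> aI <= x0 - delta -> x0 + delta <= bI ->
     ~ local_fit_min b d c delta x0 /\ ~ local_fit_max b d c delta x0) ->
  0 <= Derive (fun y => fit b d c y x0) x0 ->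
  resident_path b d c bI x0 g ->
  0 < T ->
  xs 0 = x0 ->
  (forall t, 0 <= t <= T -> aI <= xs t <= bI) ->
  (forall t, 0 <= t <= T ->
     is_derive xs t (Derive (fun y => fit b d c y (xs t)) (xs t))) ->
  forall eps, 0 < eps ->
    exists eta, 0 < eta /\
      forall delta, 0 < delta < eta ->
        forall t, 0 <= t <= T -> Rabs (g delta (t / delta ^ 2) - xs t) < eps.
Proof.
  intros HI Hb Hd Hc _ _ Hpos Hx0 _ Hs0 Hg HT Hxs0 Hin Hder eps Heps.
  destruct (analytic aI bI b d c HI Hb Hd Hc Hpos) as [L [K [HL [HK [Hlip Hstep]]]]].
  set (C0 := (2 + (K + 2 * L) / L) * exp (L * T) + 1).
  assert (HC0 : 0 < C0).
  { unfold C0. assert (0 < exp (L * T)) by apply exp_pos.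
    assert (0 <= (K + 2 * L) / L) by (apply Rmult_le_pos; [lra | apply Rlt_le, Rinv_0_lt_compat; lra]).
    nra. }
  exists (eps / C0). split. apply Rdiv_lt_0_compat; lra.
  intros delta [Hd1 Hd2] t Ht.
  assert (Hm := main_part aI bI b d c x0 g T xs (fun x => Derive (fun y => fit b d c y x) x) L K
                  Hx0 HL HK Hlip Hstep Hs0 Hg Hxs0 Hin Hder delta t Hd1 Ht).
  fold C0 in Hm.
  eapply Rle_lt_trans. exact Hm.
  apply (Rmult_lt_compat_r C0) in Hd2; auto.
  replace (eps / C0 * C0) with eps in Hd2 by (field; lra). exact Hd2.
Qed.
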